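(* Let $A$ be a brick gentle algebra. For any label $w_{\mathcal D}\in\mathcal S$, the string module $M(\mathrm{str}(w_{\mathcal D}))\in\mathcal M$ is a brick as a $\Pi(A)$-module, i.e. $\mathrm{End}_{\Pi(A)}(M(\mathrm{str}(w_{\mathcal D})))=k$.
   Context: Setting: $k$ a field, $A=kQ/I$, $Q$ finite connected quiver, $I$ admissible generated by paths (paths composed right to left). Gentle: (S1) each vertex has at most two incoming and two outgoing arrows; (S2) for each arrow $\alpha$ at most one $\beta$ with $\alpha\beta$ a path not in $I$ and at most one $\gamma$ with $\gamma\alpha$ a path not in $I$; (G1) $I$ generated by paths of length two; (G2) for each arrow $\alpha$ at most one $\beta$ with $\alpha\beta$ a path in $I$ and at most one $\gamma$ with $\gamma\alpha$ a path in $I$. Brick gentle: moreover every indecomposable module has endomorphism ring a division ring. Strings (for any $k\Gamma/J$, $J$ generated by paths): words $w=\gamma_d^{\epsilon_d}\cdots\gamma_1^{\epsilon_1}$ in arrows and formal inverses ($s(\gamma^{-1})=t(\gamma)$, $t(\gamma^{-1})=s(\gamma)$), consecutive letters composable, no $\gamma\gamma^{-1}$ or $\gamma^{-1}\gamma$, neither $w$ nor $w^{-1}$ containing a subword which is a path in $J$; plus length-zero strings; $w\sim w^{-1}$. String module $M(w)$: basis $b_1,\dots,b_{d+1}$, $b_j$ at vertex $x_j$ where $x_1=s(\gamma_1^{\epsilon_1})$, $x_{i+1}=t(\gamma_i^{\epsilon_i})$; $\gamma_i$ sends $b_i\mapsto b_{i+1}$ if $\epsilon_i=1$, $b_{i+1}\mapsto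 b_i$ if $\epsilon_i=-1$; other arrow actions on basis vectors are zero. For $w=\gamma_d^{\epsilon_d}\cdots\gamma_1^{\epsilon_1}\in\mathrm{Str}(A)$ and $1\le j\le d$, $w=w_1\gamma_j^{\epsilon_j}w_2$ gives a break $\{w_1,w_2\}$, with $w_1,w_2$ splits. Labels: $\mathcal S$ = pairs $w_{\mathcal D}=(w,\mathcal D)$, $w\in\mathrm{Str}(A)$ of length $d$, $\mathcal D$ a set of $d$ splits of $w$ no two from the same break (so exactly one from each break), modulo $(w,\mathcal D)\sim(w^{-1},\mathcal D^{-1})$. $\Pi(A)=k\overline Q/\overline I$, where $\overline Q$ adds an arrow $\gamma^*:t(\gamma)\to s(\gamma)$ for each $\gamma\in Q_1$ and $\overline I$ is generated by $\beta\alpha,\alpha^*\beta^*$ for paths $\beta\alpha\in I$ of length two. A string of $\Pi(A)$ specializes to the word obtained by replacing $\gamma^*$ by $\gamma^{-1}$ and $(\gamma^* )^{-1}$ by $\gamma$; $\mathcal M$ is the additive closure in $\mathrm{mod}(\Pi(A))$ of the string modules of strings of $\Pi(A)$ specializing to strings of $A$. The map $\mathrm{str}$: for $w_{\mathcal D}$ with $w=\gamma_d^{\epsilon_d}\cdots\gamma_1^{\epsilon_1}$, $\mathrm{str}(w_{\mathcal D})$ is the word obtained by replacing the $i$-th letter as follows: if $w=u\gamma_iw'$ with $w'\in\mathcal D$, use $\gamma_i$; if $w=u\gamma_i^{-1}w'$ with $w'\in\mathcal D$, use $\gamma_i^*$; if $w=w'\gamma_i^{-1}u$ with $w'\in\mathcal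 D$, use $\gamma_i^{-1}$; if $w=w'\gamma_iu$ with $w'\in\mathcal D$, use $(\gamma_i^* )^{-1}$ (here $u$ is a possibly empty string). This is a string of $\Pi(A)$ specializing to $w$. *)

(* Defs.v *)
From mathcomp Require Import all_boot all_order all_algebra.
Set Implicit Arguments. Unset Strict Implicit. Unset Printing Implicit Defensive.
Import GRing.Theory.
Local Open Scope ring_scope.

(* A set of relations of length two is given by R : Ar -> Ar -> bool,
   with  R b a  meaning that the path  b a  (first a, then b) lies in I.
   Letters are pairs (a, true) = a  and (a, false) = a^{-1}. *)

Section Quiver.
Variables (V Ar : finType) (s t : Ar -> V) (R : Ar -> Ar -> bool).

(* p = [:: a1; a2; ...; an] is the path an ... a2 a1 (a1 first) *)
Definition is_qpath (p : seq Ar) : bool :=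
  sorted (fun a b => t a == s b) p.

Definition path_in_I (p : seq Ar) : bool :=
  is_qpath p && has (fun ab : Ar * Ar => R ab.2 ab.1) (zip p (behead p)).

Definition connected_quiver : Prop :=
  forall x y : V,
    connect (fun u v => [exists a, ((s a == u) && (t a == v)) ||
                                  ((s a == v) && (t a == u))]) x y.

(* I is admissible (it is generated by the length-two paths R, so it is
   contained in the square of the arrow ideal); moreover some power of the
   arrow ideal lies in I. *)
Definition admissible_rel : Prop :=
  (forall b a, R b a -> t a = s b) /\
  exists N : nat, forall p : seq Ar, size p = N -> is_qpath p -> path_in_I p.

Definition gentle : Prop :=
  [/\ connected_quiver,
      admissible_rel,
      (forall x : V, #|[set a | t a == x]| <= 2 /\ #|[set a | s a == x]| <= 2)%N,
      (forall a : Ar,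
         #|[set b | (t b == s a) && ~~ R a b]| <= 1 /\
         #|[set c | (s c == t a) && ~~ R c a]| <= 1)%N
    & (* (G2) ; (G1) is built in: I is generated by the length-two paths R *)
      (forall a : Ar,
         #|[set b | (t b == s a) && R a b]| <= 1 /\
         #|[set c | (s c == t a) && R c a]| <= 1)%N].

Definition lsrc (l : Ar * bool) : V := if l.2 then s l.1 else t l.1.
Definition ltgt (l : Ar * bool) : V := if l.2 then t l.1 else s l.1.

Definition ok_pair (l1 l2 : Ar * bool) : bool :=
  [&& ltgt l1 == lsrc l2,
      ~~ ((l1.1 == l2.1) && (l1.2 != l2.2)),
      ~~ [&& l1.2, l2.2 & R l2.1 l1.1]   (* no subword gamma_{i+1} gamma_i in I *)
    & ~~ [&& ~~ l1.2, ~~ l2.2 & R l1.1 l2.1]]. (* no such subword of w^{-1} *)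

(* A string is given by its starting vertex x0 and its list of letters
   w = [:: gamma_1^{e_1}; ...; gamma_d^{e_d}] (the word gamma_d^{e_d}...gamma_1^{e_1});
   w = [::] gives the length-zero string at x0. *)
Definition isString (x0 : V) (w : seq (Ar * bool)) : bool :=
  (if w is l :: _ then lsrc l == x0 else true) && sorted ok_pair w.

(* vertex x_{j+1} of the basis vector b_{j+1} (0-indexed j) *)
Definition svert (x0 : V) (w : seq (Ar * bool)) (j : nat) : V :=
  nth x0 (x0 :: map ltgt w) j.

End Quiver.

(* A finite-dimensional module over kQ/I (Q = (V,Ar,s,t), I generated by R)
   on the space k^n (row vectors): complete set of orthogonal idempotents
   e v and arrow actions act a : k^n -> k^n, x |-> x *m act a. *)
Section Modules.
Variables (k : fieldType) (V Ar : finType) (s t : Ar -> V) (R : Ar -> Ar -> bool).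

Definition isRep (n : nat) (e : V -> 'M[k]_n) (act : Ar -> 'M[k]_n) : Prop :=
  [/\ (forall v, e v *m e v = e v),
      (forall u v, u != v -> e u *m e v = 0),
      \sum_v e v = 1%:M,
      (forall a, e (s a) *m act a *m e (t a) = act a)
    & (forall b a, R b a -> act a *m act b = 0)].

Definition isEndo (n : nat) (e : V -> 'M[k]_n) (act : Ar -> 'M[k]_n)
    (f : 'M[k]_n) : Prop :=
  (forall v, e v *m f = f *m e v) /\ (forall a, act a *m f = f *m act a).

Definition indecomposable n (e : V -> 'M[k]_n) (act : Ar -> 'M[k]_n) : Prop :=
  (0 < n)%N /\
  forall f, isEndo e act f -> f *m f = f -> f = 0 \/ f = 1%:M.

Definition End_division n (e : V -> 'M[k]_n) (act : Ar -> 'M[k]_n) : Prop :=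
  forall f, isEndo e act f -> f != 0 ->
    exists g, [/\ isEndo e act g, f *m g = 1%:M & g *m f = 1%:M].

Definition isBrick n (e : V -> 'M[k]_n) (act : Ar -> 'M[k]_n) : Prop :=
  forall f, isEndo e act f -> exists c : k, f = c%:M.

Definition brick_gentle : Prop :=
  gentle s t R /\
  forall n (e : V -> 'M[k]_n) (act : Ar -> 'M[k]_n),
    isRep e act -> indecomposable e act -> End_division e act.

(* string module M(w) of a string (x0, w): basis b_1..b_{d+1} = rows 0..d *)
Definition smod_e (x0 : V) (w : seq (Ar * bool)) (v : V) : 'M[k]_((size w).+1) :=
  \matrix_(i, j) ((i == j) && (svert s t x0 w i == v))%:R.

Definition smod_act (x0 : V) (w : seq (Ar * bool)) (a : Ar) : 'M[k]_((size w).+1) :=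
  \matrix_(i, j)
    ((((j : nat) == i.+1) && (nth (a, true) w i == (a, true))) ||
     (((i : nat) == j.+1) && (nth (a, true) w j == (a, false))))%:R.

End Modules.

Section PiA.
Variables (V Ar : finType) (s t : Ar -> V) (R : Ar -> Ar -> bool).

(* arrows of Qbar: inl a = a, inr a = a^* : t a -> s a *)
Definition piS (x : Ar + Ar) : V := match x with inl a => s a | inr a => t a end.
Definition piT (x : Ar + Ar) : V := match x with inl a => t a | inr a => s a end.
(* Ibar generated by  b a  and  a^* b^*  for  b a in I *)
Definition piR (y x : Ar + Ar) : bool :=
  match y, x with
  | inl b, inl a => R b a
  | inr a, inr b => R b a
  | _, _ => false
  end.

Definition specialize (l : (Ar + Ar) * bool) : Ar * bool :=
  match l.1 with inl a => (a, l.2) | inr a => (a, ~~ l.2) end.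

(* The label (w, D): D is a tuple with one entry per break; the i-th entry
   (0-indexed) concerns the break at letter gamma_{i+1}:
   true  = the split w' with w = u gamma_{i+1}^{e} w' (the letters before it) is in D,
   false = the split w' with w = w' gamma_{i+1}^{e} u (the letters after it) is in D. *)
Definition str_letter (l : Ar * bool) (r : bool) : (Ar + Ar) * bool :=
  (if l.2 == r then inl l.1 else inr l.1, r).

Definition str (w : seq (Ar * bool)) (D : (size w).-tuple bool) :=
  [seq str_letter p.1 p.2 | p <- zip w D].

End PiA.

(* Main.v *)
Require Import Defs.
From mathcomp Require Import all_boot all_order all_algebra.
From mathcomp Require Import zify.
Set Implicit Arguments. Unset Strict Implicit. Unset Printing Implicit Defensive.
Import GRing.Theory.
Local Open Scope ring_scope.

Lemma sum_delta (K : fieldType) n (F : 'I_n.+1 -> K) (c : nat) :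
  \sum_(m < n.+1) (((m : nat) == c)%:R * F m) = if (c < n.+1)%N then F (inord c) else 0.
Proof.
case: ifP => Hc.
- rewrite (bigD1 (inord c)) //= inordK // eqxx mul1r big1 ?addr0 // => m Hm.
  have -> : ((m:nat) == c) = false.
    apply/negbTE; apply: contra Hm => /eqP Hm'. apply/eqP/val_inj. by rewrite /= inordK // Hm'.
  by rewrite mul0r.
- rewrite big1 // => m _.
  have -> : ((m:nat) == c) = false.
    by apply/negbTE/eqP => E; move: (ltn_ord m); rewrite E Hc.
  by rewrite mul0r.
Qed.

Lemma neq_inv (A : eqType) (a : A) e (l : A * bool) : ~~ ((a == l.1) && (e != l.2)) -> (l == (a, ~~e)) = false.
Proof. case: l => b f /=; apply: contraNF => /eqP [-> ->]; by rewrite eqxx; case: e. Qed.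
Lemma neq_inv' (A : eqType) (a : A) e (l : A * bool) : ~~ ((l.1 == a) && (l.2 != e)) -> (l == (a, ~~e)) = false.
Proof. case: l => b f /=; apply: contraNF => /eqP [-> ->]; by rewrite eqxx; case: e. Qed.

Section Gen.
Variable K : fieldType.
Variables (V Ar : finType) (s t : Ar -> V) (R : Ar -> Ar -> bool).

Definition se n (y : V) (W : seq (Ar * bool)) (v : V) : 'M[K]_n.+1 :=
  \matrix_(i, j) ((i == j) && (svert s t y W i == v))%:R.

Definition sa n (W : seq (Ar * bool)) (a : Ar) : 'M[K]_n.+1 :=
  \matrix_(i, j)
    ((((j : nat) == i.+1) && (nth (a, true) W i == (a, true))) ||
     (((i : nat) == j.+1) && (nth (a, true) W j == (a, false))))%:R.

Lemma se_mull n y W v (h : 'M[K]_n.+1) i j :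
  (se n y W v *m h) i j = (svert s t y W i == v)%:R * h i j.
Proof.
rewrite !mxE (bigD1 i) //= big1 ?addr0.
  by rewrite mxE eqxx.
move=> m Hm; rewrite mxE eq_sym (negbTE Hm) /= mul0r //.
Qed.

Lemma se_mulr n y W v (h : 'M[K]_n.+1) i j :
  (h *m se n y W v) i j = h i j * (svert s t y W j == v)%:R.
Proof.
rewrite !mxE (bigD1 j) //= big1 ?addr0.
  by rewrite mxE eqxx.
move=> m Hm; rewrite mxE (negbTE Hm) /= mulr0 //.
Qed.

Lemma sa_mull n W a (h : 'M[K]_n.+1) (i j : 'I_n.+1) : size W = n ->
  (sa n W a *m h) i j =
    (((i < n)%N && (nth (a,true) W i == (a,true)))%:R * h (inord i.+1) j) +
    (((0 < i)%N && (nth (a,true) W i.-1 == (a,false)))%:R * h (inord i.-1) j).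
Proof.
move=> Hs.
rewrite !mxE.
have -> : \sum_j0 (sa n W a) i j0 * h j0 j =
   \sum_(m < n.+1) (((m:nat) == i.+1)%:R * ((nth (a,true) W i == (a,true))%:R * h m j)) +
   \sum_(m < n.+1) (((m:nat) == i.-1)%:R * (((0 < i)%N && (nth (a,true) W m == (a,false)))%:R * h m j)).
  rewrite -big_split /=; apply: eq_bigr => m _; rewrite mxE.
  case: (boolP ((m:nat) == i.+1)) => /= Hm.
    have -> : ((i:nat) == m.+1) = false by move/eqP: Hm => ->; lia.
    rewrite orbF; case: (boolP ((m:nat) == i.-1)) => /= Hm2; first by move/eqP: Hm => Hm; move/eqP: Hm2; lia.
    by rewrite !mul0r addr0 mul1r.
  rewrite mul0r add0r.
  case: (boolP ((m:nat) == i.-1)) => /= Hm2.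
    case: (boolP (0 < i)%N) => Hi /=.
      have -> : ((i:nat) == m.+1) by move/eqP: Hm2 => ->; lia.
      by rewrite /= !mul1r.
    have -> : ((i:nat) == m.+1) = false by lia.
    by rewrite /= !mul0r mulr0.
  have -> : ((i:nat) == m.+1) = false by apply/negbTE; apply: contra Hm2 => /eqP ->.
  by rewrite /= !mul0r.
rewrite !sum_delta.
have Hi3 : (i.-1 < n.+1)%N by have := ltn_ord i; lia.
rewrite Hi3 inordK //.
case: (boolP (i < n)%N) => Hi /=.
  by rewrite ltnS Hi.
case: ifP => Hi2; first by lia.
by rewrite mul0r.
Qed.

Lemma sa_mulr n W a (h : 'M[K]_n.+1) (i j : 'I_n.+1) : size W = n ->
  (h *m sa n W a) i j =
    (((0 < j)%N && (nth (a,true) W j.-1 == (a,true)))%:R * h i (inord j.-1)) +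
    (((j < n)%N && (nth (a,true) W j == (a,false)))%:R * h i (inord j.+1)).
Proof.
move=> Hs.
rewrite !mxE.
have -> : \sum_j0 h i j0 * (sa n W a) j0 j =
   \sum_(m < n.+1) (((m:nat) == j.-1)%:R * (((0 < j)%N && (nth (a,true) W m == (a,true)))%:R * h i m)) +
   \sum_(m < n.+1) (((m:nat) == j.+1)%:R * ((nth (a,true) W j == (a,false))%:R * h i m)).
  rewrite -big_split /=; apply: eq_bigr => m _; rewrite mxE.
  case: (boolP ((m:nat) == j.+1)) => /= Hm.
    have -> : ((j:nat) == m.+1) = false by move/eqP: Hm => ->; lia.
    rewrite /=; case: (boolP ((m:nat) == j.-1)) => /= Hm2; first by move/eqP: Hm => Hm; move/eqP: Hm2; lia.
    by rewrite !mul0r add0r mul1r mulrC.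
  rewrite mul0r addr0.
  case: (boolP ((m:nat) == j.-1)) => /= Hm2.
    case: (boolP (0 < j)%N) => Hi /=.
      have -> : ((j:nat) == m.+1) by move/eqP: Hm2 => ->; lia.
      by rewrite /= !mul1r orbF mulrC.
    have -> : ((j:nat) == m.+1) = false by lia.
    by rewrite /= ?(mul0r,mulr0,mul1r,mulr1,add0r,addr0).
  have -> : ((j:nat) == m.+1) = false by apply/negbTE; apply: contra Hm2 => /eqP ->.
  by rewrite /= ?(mul0r,mulr0,mul1r,mulr1,add0r,addr0).
rewrite !sum_delta.
have Hi3 : (j.-1 < n.+1)%N by have := ltn_ord j; lia.
rewrite Hi3 inordK //.
case: (boolP (j < n)%N) => Hi /=.
  by rewrite ltnS Hi.
case: ifP => Hi2; first by lia.
by rewrite mul0r addr0.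
Qed.

Lemma str_ok y W p x : isString s t R y W -> (p.+1 < size W)%N ->
  ok_pair s t R (nth x W p) (nth x W p.+1).
Proof.
case/andP => _; case: W => [|l W] //= /(pathP x) Hs Hp.
by apply: Hs.
Qed.

Lemma str_noinv y W p x : isString s t R y W -> (p.+1 < size W)%N ->
  ~~ (((nth x W p).1 == (nth x W p.+1).1) && ((nth x W p).2 != (nth x W p.+1).2)).
Proof. by move=> H1 H2; case/and4P: (str_ok x H1 H2). Qed.

Lemma svert_S y W p x : (p < size W)%N -> svert s t y W p.+1 = ltgt s t (nth x W p).
Proof. by move=> Hp; rewrite /svert /= (nth_map x). Qed.

Lemma str_src y W p x : isString s t R y W -> (p < size W)%N ->
  svert s t y W p = lsrc s t (nth x W p).
Proof.
move=> Hstr Hp; case: p Hp => [|p] Hp.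
  case/andP: Hstr; case: W Hp => [|l W] //= _ /eqP -> _.
  by rewrite /svert.
rewrite (svert_S y x); last by lia.
by case/and4P: (str_ok x Hstr Hp) => /eqP.
Qed.

Lemma str_rep n y W : size W = n -> isString s t R y W ->
  isRep s t R (se n y W) (sa n W).
Proof.
move=> Hs Hstr; split.
- move=> v; apply/matrixP => i j; rewrite se_mull mxE -natrM mulnb.
  by case: (svert s t y W i == v); case: (i == j).
- move=> u v Huv; apply/matrixP => i j; rewrite se_mull !mxE -natrM mulnb.
  case: (boolP (svert s t y W i == u)) => //= /eqP Hu.
  by rewrite Hu (negbTE Huv) andbF.
- apply/matrixP => i j; rewrite summxE !mxE.
  case: (boolP (i == j)) => Hij /=.
    rewrite (bigD1 (svert s t y W i)) //= big1 ?addr0.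
      by rewrite mxE Hij eqxx.
    by move=> v Hv; rewrite mxE Hij /= eq_sym (negbTE Hv).
  by rewrite big1 // => v _; rewrite mxE (negbTE Hij).
- move=> a; apply/matrixP => i j; rewrite se_mulr se_mull.
  have Hi := ltn_ord i; have Hj := ltn_ord j.
  rewrite [sa n W a i j]mxE.
  case: (boolP ((((j : nat) == i.+1) && (nth (a, true) W i == (a, true))) ||
     (((i : nat) == j.+1) && (nth (a, true) W j == (a, false))))) => H; last by rewrite /= !(mulr0, mul0r).
  case/orP: H => /andP [/eqP Hj1 /eqP Hl].
    have Hi' : (i < size W)%N by lia.
    rewrite (str_src (a,true) Hstr Hi') Hl Hj1 (svert_S y (a,true) Hi') Hl /=.
    by rewrite /lsrc /ltgt /= !eqxx mulr1 mul1r.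
  have Hj' : (j < size W)%N by lia.
  rewrite (str_src (a,true) Hstr Hj') Hl Hj1 (svert_S y (a,true) Hj') Hl /=.
  by rewrite /lsrc /ltgt /= !eqxx !mulr1.
- move=> b a Hba; apply/matrixP => i j; rewrite sa_mull // [RHS]mxE.
  have Hi := ltn_ord i; have Hj := ltn_ord j.
  have T1 : ((i < n)%N && (nth (a, true) W i == (a, true)))%:R * sa n W b (inord i.+1) j = 0 :> K.
    case: (boolP ((i < n)%N && (nth (a, true) W i == (a, true)))) => H; last by rewrite mul0r.
    case/andP: H => Hin /eqP Hl.
    rewrite mxE inordK; last by lia.
    case: (boolP ((j:nat) == i.+2)) => /= Hj2.
      case: (boolP (nth (b, true) W i.+1 == (b, true))) => /= Hl2; last first.
        have -> : ((i.+1 == j.+1) = false) by move/eqP: Hj2 => ->; lia.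
        by rewrite mulr0.
      have Hp : (i.+1 < size W)%N by move/eqP: Hj2; lia.
      case/and4P: (str_ok (a,true) Hstr Hp) => _ _ + _.
      rewrite Hl (set_nth_default (b,true) (a,true) Hp) (eqP Hl2) /= Hba //.
    case: (boolP (i.+1 == j.+1)) => //= Hj3; last by rewrite mulr0.
    move: Hj3; rewrite eqSS => /eqP Hij; rewrite -Hij.
    have HiW : (i < size W)%N by rewrite Hs.
    rewrite (set_nth_default (a,true) (b,true) HiW) Hl.
    by rewrite xpair_eqE andbF mulr0.
  have T2 : ((0 < i)%N && (nth (a, true) W i.-1 == (a, false)))%:R * sa n W b (inord i.-1) j = 0 :> K.
    case: (boolP ((0 < i)%N && (nth (a, true) W i.-1 == (a, false)))) => H; last by rewrite mul0r.
    case/andP: H => Hi0 /eqP Hl.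
    have Hi1 : (i.-1 < size W)%N by lia.
    rewrite mxE inordK; last by lia.
    case: (boolP ((j:nat) == i.-1.+1)) => /= Hj2.
      rewrite (set_nth_default (a,true) (b,true) Hi1) Hl /=.
      have -> : (((i.-1) == j.+1) = false) by move/eqP: Hj2 => ->; lia.
      by rewrite xpair_eqE /= ?andbF /= mulr0.
    case: (boolP (i.-1 == j.+1)) => //= Hj3; last by rewrite mulr0.
    case: (boolP (nth (b, true) W j == (b, false))) => /= Hl2; last by rewrite mulr0.
    have Hp : (j.+1 < size W)%N by move/eqP: Hj3; lia.
    case/and4P: (str_ok (a,true) Hstr Hp) => _ _ _.
    rewrite (set_nth_default (b,true) (a,true) (ltnW Hp)) (eqP Hl2).
    have -> : j.+1 = i.-1 by apply/eqP; rewrite eq_sym.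
    by rewrite Hl /= Hba.
  by rewrite T1 T2 addr0.
Qed.

Lemma endo_zero n y W (h : 'M[K]_n.+1) (i j : 'I_n.+1) :
  isEndo (se n y W) (sa n W) h -> svert s t y W i != svert s t y W j -> h i j = 0.
Proof.
case=> He _ Hij.
have := congr1 (fun M : 'M[K]_n.+1 => M i j) (He (svert s t y W i)).
by rewrite /= se_mull se_mulr eqxx mul1r eq_sym (negbTE Hij) mulr0.
Qed.

Lemma endo_step n y W (h : 'M[K]_n.+1) p q x :
  isString s t R y W -> size W = n -> isEndo (se n y W) (sa n W) h ->
  (p < n)%N -> (q < n)%N -> nth x W p = nth x W q ->
  h (inord p.+1) (inord q.+1) = h (inord p) (inord q).
Proof.
move=> Hstr Hs [_ Ha] Hp Hq Hpq.
have HpW : (p < size W)%N by rewrite Hs.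
have HqW : (q < size W)%N by rewrite Hs.
set a := (nth x W p).1.
have Ep : nth (a,true) W p = nth x W p by apply: set_nth_default.
have Eq : nth (a,true) W q = nth x W q by apply: set_nth_default.
case Heps : (nth x W p).2.
- have Hl : nth (a,true) W p = (a,true) by rewrite Ep /a; case: (nth x W p) Heps => ? [] //=.
  have := congr1 (fun M : 'M[K]_n.+1 => M (inord p) (inord q.+1)) (Ha a).
  rewrite /= sa_mull // sa_mulr // !inordK; try lia.
  rewrite Hp Hl eqxx /= mul1r.
  have -> : (q.+1 < n)%N && (nth (a, true) W q.+1 == (a, false)) = false.
    case: (boolP (q.+1 < n)%N) => //= Hq1.
    have Hq1' : (q.+1 < size W)%N by rewrite Hs.
    have := str_noinv (a,true) Hstr Hq1'; rewrite Eq -Hpq -Ep Hl /=.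
    by move/neq_inv.
  have -> : (0 < p)%N && (nth (a, true) W p.-1 == (a, false)) = false.
    case: (boolP (0 < p)%N) => //= Hp0.
    have Hp1 : (p.-1.+1 < size W)%N by lia.
    have := str_noinv (a,true) Hstr Hp1; rewrite prednK // Hl /=.
    by move/neq_inv'.
  rewrite Eq -Hpq -Ep Hl eqxx /= mul0r !addr0 mul1r => ->.
  by rewrite mul0r addr0.
- have Hl : nth (a,true) W p = (a,false) by rewrite Ep /a; case: (nth x W p) Heps => ? [] //=.
  have := congr1 (fun M : 'M[K]_n.+1 => M (inord p.+1) (inord q)) (Ha a).
  rewrite /= sa_mull // sa_mulr // !inordK; try lia.
  rewrite /= Hl eqxx /= mul1r.
  have -> : (p.+1 < n)%N && (nth (a, true) W p.+1 == (a, true)) = false.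
    case: (boolP (p.+1 < n)%N) => //= Hp1.
    have Hp1' : (p.+1 < size W)%N by rewrite Hs.
    have := str_noinv (a,true) Hstr Hp1'; rewrite Hl /=.
    by move/neq_inv.
  have -> : (0 < q)%N && (nth (a, true) W q.-1 == (a, true)) = false.
    case: (boolP (0 < q)%N) => //= Hq0.
    have Hq1 : (q.-1.+1 < size W)%N by lia.
    have := str_noinv (a,true) Hstr Hq1; rewrite prednK // Eq -Hpq -Ep Hl /=.
    by move/neq_inv'.
  rewrite Hq Eq -Hpq -Ep Hl eqxx /= mul0r add0r mul1r => E.
  by rewrite E mul0r add0r.
Qed.

Lemma dir_neqF (a : Ar) (l : Ar * bool) : l.2 -> (l == (a,false)) = false.
Proof. by case: l => ? [] //= _; rewrite xpair_eqE andbF. Qed.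
Lemma dir_neqT (a : Ar) (l : Ar * bool) : ~~ l.2 -> (l == (a,true)) = false.
Proof. by case: l => ? [] //= _; rewrite xpair_eqE andbF. Qed.

Lemma bR (b c : bool) : b = c -> (b%:R : K) = c%:R.
Proof. by move=> ->. Qed.

Section Shift.
Variables (y : V) (W : seq (Ar * bool)) (d m : nat).
Hypotheses (Hs : size W = (d + m)%N) (Hstr : isString s t R y W) (Hd : (0 < d)%N) (Hm : (m < d)%N).
Hypothesis Hcopy : forall p x, (p < m)%N -> nth x W (p + d) = nth x W p.
Hypothesis Hvert : forall p q, (p <= d + m)%N -> (q <= d + m)%N ->
  svert s t y W p = svert s t y W q -> [\/ p = q, p = (q + d)%N | q = (p + d)%N].
Hypothesis Hper : forall p, (p <= m)%N -> svert s t y W (p + d) = svert s t y W p.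
Hypothesis HdirM : forall x, (nth x W m).2.
Hypothesis HdirL : forall x, (nth x W d.-1).2.
Hypothesis Hninv : forall x,
  ~~ (((nth x W d.-1).1 == (nth x W 0).1) && ((nth x W d.-1).2 != (nth x W 0).2)).

Definition shiftmx : 'M[K]_((d + m).+1) :=
  \matrix_(i, j) ((((i : nat) <= m)%N && ((j : nat) == i + d)%N))%:R.

Lemma shift_sq : shiftmx *m shiftmx = 0.
Proof.
apply/matrixP => i j; rewrite !mxE big1 // => l _; rewrite !mxE -natrM mulnb.
have -> : ((((i:nat) <= m)%N && ((l:nat) == i + d)%N) && (((l:nat) <= m)%N && ((j:nat) == l + d)%N)) = false.
  by apply/negbTE; apply/negP => /andP [/andP [_ /eqP H1] /andP [H2 _]]; lia.
done.
Qed.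

Lemma shift_nz : shiftmx != 0.
Proof.
apply/negP => /eqP /matrixP /(_ (inord 0) (inord d)); rewrite !mxE !inordK; try lia.
by rewrite /= add0n eqxx /= => /eqP; rewrite oner_eq0.
Qed.

Lemma shift_endo : isEndo (se (d + m) y W) (sa (d + m) W) shiftmx.
Proof.
split.
- move=> v; apply/matrixP => i j; rewrite se_mull se_mulr mxE.
  case: (boolP (((i:nat) <= m)%N && ((j:nat) == i + d)%N)) => H; last by rewrite !(mulr0,mul0r).
  move/andP: H => [Hi /eqP Hj]; rewrite Hj Hper //.
  by rewrite mulr1 mul1r.
- move=> a; apply/matrixP => i j; rewrite sa_mull // sa_mulr //.
  have HI := ltn_ord i; have HJ := ltn_ord j.
  have Hi1 : ((inord i.-1 : 'I_((d+m).+1)) : nat) = i.-1 by rewrite inordK //; lia.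
  have Hj1 : ((inord j.-1 : 'I_((d+m).+1)) : nat) = j.-1 by rewrite inordK //; lia.
  congr (_ + _).
  + rewrite !mxE Hj1 -!natrM !mulnb; apply: bR.
    case: (boolP ((i:nat) < d + m)%N) => Hi /=; last first.
      have -> : ((i:nat) <= m)%N = false by lia.
      by rewrite /= andbF.
    rewrite inordK; last by lia.
    case: (boolP ((j:nat) == i.+1 + d)%N) => Hj.
      case: (boolP ((i:nat) < m)%N) => Him.
        move/eqP: Hj => Hj.
        have -> : (0 < j)%N by lia.
        have -> : (j.-1 = i + d)%N by lia.
        have -> : ((i:nat) <= m)%N by lia.
        by rewrite Hcopy // eqxx /= !andbT.
      rewrite /= andbF /=; apply/esym/negbTE; apply/negP => /and3P [_ _ /eqP]; move/eqP: Hj; lia.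
    rewrite /= !andbF /=; apply/esym/negbTE; apply/negP => /and3P [/andP [? _] _ /eqP].
    move: Hj; lia.
  + rewrite !mxE Hi1 -!natrM !mulnb; apply: bR.
    case: (boolP ((j:nat) < d + m)%N) => Hj /=; last first.
      apply/negbTE/negP => /and3P [/andP [Hi0 Hl] Hi1m /eqP Hjd].
      have Him : i.-1 = m by lia.
      move: Hl; rewrite Him.
      by rewrite dir_neqF.
    rewrite inordK; last by lia.
    case: (boolP ((0 < i)%N && (i.-1 <= m)%N && ((j:nat) == i.-1 + d)%N)) => H.
      case/andP: H => /andP [Hi0 Hi1m] /eqP Hjd.
      rewrite Hi0 Hi1m Hjd eqxx /= !andbT.
      case: (boolP ((i:nat) <= m)%N) => Him.
        have -> : (i.-1 + d).+1 == (i + d)%N by apply/eqP; lia.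
        rewrite andbT Hcopy //; lia.
      have -> : i.-1 = m by lia.
      rewrite andbF.
      by rewrite dir_neqF.
    have -> : [&& (0 < i)%N && (nth (a, true) W i.-1 == (a, false)), (i.-1 <= m)%N & (j:nat) == (i.-1 + d)%N] = false.
      by apply/negbTE; apply: contra H => /and3P [/andP [-> _] -> ->].
    apply/esym/negbTE/negP => /and3P [Hl Him /eqP Hji].
    case: (boolP (0 < i)%N) => Hi0.
      move: H; rewrite Hi0 /=.
      have -> : (i.-1 <= m)%N by lia.
      have -> : ((j:nat) == i.-1 + d)%N by apply/eqP; lia.
      done.
    have Hjd : (j:nat) = d.-1 by lia.
    move: Hl; rewrite Hjd.
    by rewrite dir_neqF.
Qed.

Lemma shift_indec (h : 'M[K]_((d + m).+1)) :
  isEndo (se (d + m) y W) (sa (d + m) W) h -> h *m h = h -> h = 0 \/ h = 1%:M.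
Proof.
move=> He Hh.
have [x0 _] : exists x : Ar * bool, True by case: (W) Hs => [|l ?] /= H; [lia | by exists l].
set c := h (inord 0) (inord 0).
set dl := h (inord 0) (inord d).
have HD : forall p, (p <= d + m)%N -> h (inord p) (inord p) = c.
  elim=> [//|p IH] Hp.
  rewrite (endo_step (p:=p) (q:=p) (x:=x0) Hstr Hs He); [by apply: IH; lia | lia | lia | by []].
have HU : forall p, (p <= m)%N -> h (inord p) (inord (p + d)) = dl.
  elim=> [|p IH] Hp; first by rewrite add0n.
  rewrite addSn (endo_step (p:=p) (q:=(p+d)%N) (x:=x0) Hstr Hs He); [apply: IH; lia|lia|lia|].
  by rewrite Hcopy //; lia.
have HL0 : h (inord d) (inord 0) = 0.
  set a := (nth x0 W d.-1).1.
  have Hl : nth (a,true) W d.-1 = (a,true).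
    rewrite (set_nth_default x0); last by lia.
    by rewrite /a; case: (nth x0 W d.-1) (HdirL x0) => ? [].
  have := congr1 (fun M : 'M[K]_((d+m).+1) => M (inord d.-1) (inord 0)) (He.2 a).
  rewrite /= sa_mull // sa_mulr // !inordK; try lia.
  have -> : (0 < d.-1)%N && (nth (a, true) W d.-1.-1 == (a, false)) = false.
    case: (boolP (0 < d.-1)%N) => //= Hd1.
    have Hp1 : (d.-1.-1.+1 < size W)%N by lia.
    have := str_noinv (a,true) Hstr Hp1; rewrite prednK // Hl /=.
    by move/neq_inv'.
  have -> : (0 < d + m)%N && (nth (a, true) W 0 == (a, false)) = false.
    have := Hninv (a,true); rewrite Hl /=.
    by move/neq_inv => ->; rewrite andbF.
  have -> : (d.-1 < d + m)%N by lia.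
  rewrite Hl eqxx /= prednK // mul1r !mul0r !addr0 => ->.
  done.
have HV : forall p, (p <= m)%N -> h (inord (p + d)) (inord p) = 0.
  elim=> [|p IH] Hp; first by rewrite add0n.
  rewrite addSn (endo_step (p:=(p+d)%N) (q:=p) (x:=x0) Hstr Hs He); [apply: IH; lia|lia|lia|].
  by rewrite Hcopy //; lia.
have Hdec : h = c%:M + dl *: shiftmx.
  apply/matrixP => i j; rewrite !mxE.
  have HI := ltn_ord i; have HJ := ltn_ord j.
  case: (boolP (svert s t y W i == svert s t y W j)) => Hv; last first.
    rewrite (endo_zero He Hv).
    have -> : (i == j) = false by apply/negbTE; apply: contra Hv => /eqP ->.
    have -> : ((i:nat) <= m)%N && ((j:nat) == i + d)%N = false.
      apply/negbTE; apply: contra Hv => /andP [Him /eqP ->].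
      by rewrite Hper.
    by rewrite mulr0n mulr0 addr0.
  have HI' : ((i:nat) <= d + m)%N by lia.
  have HJ' : ((j:nat) <= d + m)%N by lia.
  case: (Hvert HI' HJ' (eqP Hv)) => Hij.
  - have -> : j = i by apply/val_inj.
    rewrite eqxx mulr1n.
    have -> : ((i:nat) == i + d)%N = false by lia.
    by rewrite andbF mulr0 addr0 -(HD i) ?inord_val //; lia.
  - have -> : (i == j) = false by apply/negbTE/eqP => E; move: Hij; rewrite E; lia.
    have -> : ((j:nat) == i + d)%N = false by lia.
    rewrite andbF mulr0 mulr0n addr0.
    have := HV j; rewrite -Hij !inord_val; apply; lia.
  - have -> : (i == j) = false by apply/negbTE/eqP => E; move: Hij; rewrite E; lia.
    have -> : ((i:nat) <= m)%N by lia.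
    rewrite Hij eqxx mulr1 mulr0n add0r.
    have := HU i; rewrite -Hij !inord_val; apply; lia.
have E : h *m h = (c * c)%:M + (c * dl + c * dl) *: shiftmx.
  rewrite {1 2}Hdec mulmxDl !mulmxDr !mul_scalar_mx mul_mx_scalar -scalemxAl -scalemxAr shift_sq.
  by rewrite !scaler0 addr0 scale_scalar_mx !scalerA -addrA scalerDl.
have H00 := congr1 (fun M : 'M[K]_((d+m).+1) => M (inord 0) (inord 0)) (etrans (esym E) Hh).
have H0d := congr1 (fun M : 'M[K]_((d+m).+1) => M (inord 0) (inord d)) (etrans (esym E) Hh).
move: H00 H0d; rewrite Hdec !mxE !inordK; try lia.
have Hne : ((inord 0 : 'I_((d+m).+1)) == inord d) = false.
  by apply/negbTE; rewrite -val_eqE /= !inordK //; lia.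
have -> : (0 == 0 + d)%N = false by lia.
rewrite eqxx Hne add0n eqxx /= mulr1n mulr0n !mulr0 !mulr1 !addr0 !add0r => Hcc Hdd.
have : c * (c - 1) = 0 by rewrite mulrBr mulr1 Hcc subrr.
move/eqP; rewrite mulf_eq0; case/orP => /eqP Hc.
  left; have Hd0 : dl = 0 by rewrite -Hdd Hc !mul0r addr0.
  by rewrite Hc Hd0 scale0r addr0; apply/matrixP => i j; rewrite !mxE mul0rn.
right; have Hc1 : c = 1 by apply/eqP; rewrite -subr_eq0 Hc.
have Hd0 : dl = 0.
  by move: Hdd; rewrite Hc1 mul1r => /eqP; rewrite -subr_eq0 addrK => /eqP.
by rewrite Hc1 Hd0 scale0r addr0.
Qed.

End Shift.

End Gen.

Definition flipW (Ar : Type) (W : seq (Ar * bool)) := map (fun l => (l.1, ~~ l.2)) W.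

Lemma path_map_imp (T U : Type) (f : T -> U) (e : rel T) (e' : rel U) :
  (forall a b, e a b -> e' (f a) (f b)) -> forall x p, path e x p -> path e' (f x) (map f p).
Proof.
move=> H x p; elim: p x => //= z p IH x /andP [H1 H2].
by rewrite H // IH.
Qed.

Section Flip.
Variable K : fieldType.
Variables (V Ar : finType) (s t : Ar -> V) (R : Ar -> Ar -> bool).
Local Notation Rop := (fun b a => R a b).

Lemma lsrc_flip l : lsrc t s (l.1, ~~ l.2) = lsrc s t l.
Proof. by case: l => ? []. Qed.
Lemma ltgt_flip l : ltgt t s (l.1, ~~ l.2) = ltgt s t l.
Proof. by case: l => ? []. Qed.

Lemma svert_flip y W p : svert t s y (flipW W) p = svert s t y W p.
Proof. by rewrite /svert /flipW -map_comp; congr (nth _ (_ :: _) _); apply: eq_map => l /=; rewrite ltgt_flip. Qed.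

Lemma ok_pair_flip l1 l2 : ok_pair s t R l1 l2 ->
  ok_pair t s Rop (l1.1, ~~ l1.2) (l2.1, ~~ l2.2).
Proof.
rewrite /ok_pair lsrc_flip ltgt_flip /=.
case/and4P => -> H2 H3 H4 /=; rewrite !negbK.
apply/and3P; split.
- by case: (l1.2) (l2.2) H2 => [] [].
- by move: H4; case: (l1.2) (l2.2) => [] [].
- by move: H3; case: (l1.2) (l2.2) => [] [].
Qed.

Lemma isString_flip y W : isString s t R y W -> isString t s Rop y (flipW W).
Proof.
case/andP => H1 H2; apply/andP; split.
  by case: W H1 {H2} => [|l W] //=; rewrite lsrc_flip.
rewrite /flipW; case: W H2 {H1} => [|l W] //= H2.
by apply: (path_map_imp (f := fun l : Ar * bool => (l.1, ~~ l.2))) H2 => ??; apply: ok_pair_flip.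
Qed.

Lemma flip_eqE (l : Ar * bool) a e : ((l.1, ~~ l.2) == (a, e)) = (l == (a, ~~ e)).
Proof. by case: l => ? []; case: e; rewrite !xpair_eqE. Qed.

Lemma se_flip n y W v : se K t s n y (flipW W) v = se K s t n y W v.
Proof. by apply/matrixP => i j; rewrite !mxE svert_flip. Qed.

Lemma se_tr n y W v : (se K s t n y W v)^T = se K s t n y W v.
Proof.
apply/matrixP => i j; rewrite !mxE.
case: (eqVneq i j) => [->|H]; first by [].
by [].
Qed.

Lemma sa_flip n (W : seq (Ar * bool)) a : size W = n -> sa K n (flipW W) a = (sa K n W a)^T.
Proof.
move=> Hs; apply/matrixP => i j; rewrite !mxE.
have HI := ltn_ord i; have HJ := ltn_ord j.
case: (boolP ((j:nat) == i.+1)) => Hj /=.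
  have Hi : (i < size W)%N by move/eqP: Hj; lia.
  rewrite /flipW (nth_map (a,true)) // flip_eqE /=.
  have -> : ((i:nat) == j.+1) = false by move/eqP: Hj; lia.
  by rewrite /= orbF.
case: (boolP ((i:nat) == j.+1)) => Hi //=.
have Hj' : (j < size W)%N by move/eqP: Hi; lia.
by rewrite /flipW (nth_map (a,true)) // flip_eqE /= orbF.
Qed.

Lemma endo_tr n (e e' : V -> 'M[K]_n.+1) (act act' : Ar -> 'M[K]_n.+1) f :
  isEndo e act f -> (forall v, (e v)^T = e' v) -> (forall a, (act a)^T = act' a) ->
  isEndo e' act' f^T.
Proof.
case=> He Ha Hee Haa; split => [v|a].
  by rewrite -Hee -!trmx_mul He.
by rewrite -Haa -!trmx_mul Ha.
Qed.

End Flip.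

Lemma contra_bg (K : fieldType) (V Ar : finType) (s t : Ar -> V) R n
    (e : V -> 'M[K]_n.+1) act S :
  brick_gentle K s t R -> isRep s t R e act ->
  (forall h, isEndo e act h -> h *m h = h -> h = 0 \/ h = 1%:M) ->
  isEndo e act S -> S != 0 -> S *m S = 0 -> False.
Proof.
case=> _ Hbg Hrep Hind HS HS0 HSS.
have [g [_ Hg _]] := Hbg _ e act Hrep (conj (ltn0Sn n) Hind) S HS HS0.
move/eqP: HS0; apply.
by rewrite -[S]mulmx1 -Hg mulmxA HSS mul0mx.
Qed.

Lemma path_take (T : Type) (e : rel T) x n (p : seq T) : path e x p -> path e x (take n p).
Proof. by rewrite -{1}(cat_take_drop n p) cat_path => /andP []. Qed.

Section Walk.
Variables (V Ar : finType) (s t : Ar -> V) (R : Ar -> Ar -> bool).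

Lemma svert_cat y W1 W2 p : (p <= size W1)%N -> svert s t y (W1 ++ W2) p = svert s t y W1 p.
Proof.
move=> Hp; rewrite /svert map_cat -cat_cons nth_cat /= size_map ltnS Hp.
done.
Qed.

Lemma svert_cat2 y W1 W2 p : (p <= size W2)%N ->
  svert s t y (W1 ++ W2) (size W1 + p) = svert s t (svert s t y W1 (size W1)) W2 p.
Proof.
case: p => [|p] Hp; first by rewrite addn0 svert_cat.
rewrite addnS /svert /= map_cat nth_cat size_map.
have -> : (size W1 + p < size W1)%N = false by lia.
rewrite addKn; apply: set_nth_default; rewrite size_map; lia.
Qed.

Lemma svert_take y W k p : (p <= k)%N -> svert s t y (take k W) p = svert s t y W p.
Proof.
case: p => [|p] Hp //.
by rewrite /svert /= map_take nth_take.
Qed.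

Lemma lsrc_inv (l1 l2 : Ar * bool) : l1.1 = l2.1 -> l1.2 != l2.2 -> lsrc s t l1 = ltgt s t l2.
Proof. by case: l1 l2 => a [] [b []] //= ->. Qed.

Lemma string_rot y W0 k x : isString s t R y W0 -> (k < size W0)%N ->
  (k = 0%N \/ ok_pair s t R (nth x W0 (size W0).-1) (nth x W0 0)) ->
  isString s t R y (W0 ++ take k W0).
Proof.
case: W0 => [|l W0'] //.
rewrite /isString /= => /andP [-> Hp] Hk Hor /=.
rewrite cat_path Hp /=.
case: k Hk Hor => [|k] Hk Hor; first by rewrite take0.
case: Hor => [//|Hok].
rewrite /= (last_nth x) Hok /=.
exact: path_take.
Qed.

End Walk.

Lemma closed_walk (K : fieldType) (V Ar : finType) (s t : Ar -> V) R (y : V) (W0 : seq (Ar * bool)) :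
  brick_gentle K s t R -> isString s t R y W0 -> (0 < size W0)%N ->
  svert s t y W0 (size W0) = y ->
  (forall p q, (p < size W0)%N -> (q < size W0)%N ->
     svert s t y W0 p = svert s t y W0 q -> p = q) -> False.
Proof.
move=> Hbg Hstr Hd0 Hcl Hdis.
have [x0 _] : exists x : Ar * bool, True by case: (W0) Hd0 => [|l ?] //; exists l.
have Hninv0 : forall x, ~~ (((nth x W0 (size W0).-1).1 == (nth x W0 0).1) &&
                         ((nth x W0 (size W0).-1).2 != (nth x W0 0).2)).
  move=> x; rewrite !(set_nth_default x0); try lia.
  apply/negP => /andP [/eqP E1 E2].
  case: (ltngtP (size W0) 2) => Hd2.
  - have Hd1 : size W0 = 1%N by lia.
    by move: E2; rewrite Hd1 eqxx.
  - have Hp : ((size W0).-1 < size W0)%N by lia.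
    have Hq : (0 < size W0)%N by lia.
    have := Hdis (size W0).-1 1%N Hp (ltnW Hd2).
    rewrite (str_src x0 Hstr Hp) (svert_S s t y x0 Hq) (lsrc_inv s t E1 E2).
    move=> H; have := H erefl; lia.
  - have Hp : (0.+1 < size W0)%N by lia.
    have := str_noinv x0 Hstr Hp.
    by move: E1 E2; rewrite Hd2 /= => -> E2; rewrite eqxx eq_sym E2.
pose d := size W0.
pose k := if (nth x0 W0 0).2 == (nth x0 W0 d.-1).2 then 0%N else d.-1.
have Hk : (k < d)%N by rewrite /k; case: ifP; rewrite /d; lia.
have Hk0 : k = 0%N \/ (k = d.-1 /\ (nth x0 W0 0).2 != (nth x0 W0 d.-1).2).
  by rewrite /k; case: ifP => H; [left | right; split => //; apply/negbT].
pose W := W0 ++ take k W0.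
have Hs : size W = (d + k)%N by rewrite size_cat size_take Hk.
have Hstr' : isString s t R y W.
  apply: (string_rot (x := x0) Hstr Hk).
  case: Hk0 => [->|[-> Hne]]; [by left | right].
  apply/and4P; split.
  - rewrite -(svert_S s t y); last by rewrite /d in Hd0 *; lia.
    rewrite prednK // Hcl -(str_src x0 Hstr Hd0) //.
  - exact: Hninv0.
  - by move: Hne; rewrite /d; case: (nth x0 W0 0).2; case: (nth x0 W0 (size W0).-1).2.
  - by move: Hne; rewrite /d; case: (nth x0 W0 0).2; case: (nth x0 W0 (size W0).-1).2.
have Hsv : forall p, (p <= d + k)%N -> svert s t y W p = svert s t y W0 (p %% d).
  move=> p Hp; case: (ltnP p d) => Hpd.
    by rewrite svert_cat ?modn_small //; lia.
  have -> : p = (size W0 + (p - d))%N by rewrite /d; lia.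
  rewrite svert_cat2; last by rewrite size_take Hk; lia.
  rewrite -/d Hcl svert_take; last by lia.
  by rewrite modnDl modn_small //; lia.
have Hvert : forall p q, (p <= d + k)%N -> (q <= d + k)%N ->
    svert s t y W p = svert s t y W q -> [\/ p = q, p = (q + d)%N | q = (p + d)%N].
  move=> p q Hp Hq; rewrite !Hsv // => /Hdis H.
  have := H (ltn_pmod _ Hd0) (ltn_pmod _ Hd0).
  case: (ltnP p d) => Hpd; case: (ltnP q d) => Hqd.
  - by rewrite !modn_small // => ->; constructor 1.
  - have -> : q = (d + (q - d))%N by lia.
    rewrite modnDl !modn_small //; try lia.
    by move=> ->; constructor 3; lia.
  - have -> : p = (d + (p - d))%N by lia.
    rewrite modnDl !modn_small //; try lia.
    by move=> <-; constructor 2; lia.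
  - have -> : p = (d + (p - d))%N by lia.
    have -> : q = (d + (q - d))%N by lia.
    rewrite !modnDl !modn_small //; try lia.
    by move=> ->; constructor 1.
have Hper : forall p, (p <= k)%N -> svert s t y W (p + d) = svert s t y W p.
  move=> p Hp; rewrite !Hsv; try lia.
  by rewrite modnDr.
have Hnth : forall x p, (p < d)%N -> nth x W p = nth x W0 p.
  by move=> x p Hp; rewrite nth_cat -/d Hp.
have Hcopy : forall p x, (p < k)%N -> nth x W (p + d) = nth x W p.
  move=> p x Hp; rewrite [RHS]Hnth; last by lia.
  rewrite nth_cat -/d.
  have -> : (p + d < d)%N = false by lia.
  by rewrite addnK nth_take.
have HdirL : forall x, (nth x W d.-1).2 = (nth x0 W0 d.-1).2.
  move=> x; rewrite Hnth; last by lia.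
  by rewrite (set_nth_default x0) //; rewrite /d; lia.
have HdirM : forall x, (nth x W k).2 = (nth x0 W0 d.-1).2.
  move=> x; rewrite Hnth // (set_nth_default x0); last by rewrite /d; lia.
  by rewrite /k; case: ifP => [/eqP //| _].
have Hninv : forall x, ~~ (((nth x W d.-1).1 == (nth x W 0).1) && ((nth x W d.-1).2 != (nth x W 0).2)).
  by move=> x; rewrite !Hnth //; try lia; apply: Hninv0.
have Hd : (0 < d)%N := Hd0.
case Hb : (nth x0 W0 d.-1).2.
- have HdL : forall x, (nth x W d.-1).2 by move=> x; rewrite HdirL.
  have HdM : forall x, (nth x W k).2 by move=> x; rewrite HdirM.
  apply: (contra_bg (S := shiftmx K d k) Hbg (str_rep K Hs Hstr')).
  + move=> h; exact: (shift_indec Hs Hstr' Hd Hk Hcopy Hvert Hper HdL Hninv).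
  + exact: (shift_endo K Hs Hstr' Hd Hk Hcopy Hper HdM HdL).
  + exact: (shift_nz K Hs Hstr' Hd Hk).
  + exact: (shift_sq K Hs Hstr' Hd Hk).
pose W' := flipW W.
have Hs' : size W' = (d + k)%N by rewrite size_map.
have Hstr'' : isString t s (fun b a => R a b) y W' := isString_flip Hstr'.
have Hcopy' : forall p x, (p < k)%N -> nth x W' (p + d) = nth x W' p.
  move=> p x Hp; rewrite /W' /flipW !(nth_map x) ?Hcopy //; rewrite Hs; lia.
have Hvert' : forall p q, (p <= d + k)%N -> (q <= d + k)%N ->
    svert t s y W' p = svert t s y W' q -> [\/ p = q, p = (q + d)%N | q = (p + d)%N].
  by move=> p q Hp Hq; rewrite !svert_flip; apply: Hvert.
have Hper' : forall p, (p <= k)%N -> svert t s y W' (p + d) = svert t s y W' p.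
  by move=> p Hp; rewrite !svert_flip; apply: Hper.
have HdL' : forall x, (nth x W' d.-1).2.
  by move=> x; rewrite /W' /flipW (nth_map x) /= ?HdirL ?Hb //; rewrite Hs; lia.
have HdM' : forall x, (nth x W' k).2.
  by move=> x; rewrite /W' /flipW (nth_map x) /= ?HdirM ?Hb //; rewrite Hs; lia.
have Hninv' : forall x, ~~ (((nth x W' d.-1).1 == (nth x W' 0).1) && ((nth x W' d.-1).2 != (nth x W' 0).2)).
  move=> x; rewrite /W' /flipW !(nth_map x) /=; try (rewrite Hs; lia).
  by rewrite (inj_eq negb_inj); apply: Hninv.
apply: (contra_bg (S := (shiftmx K d k)^T) Hbg (str_rep K Hs Hstr')).
+ move=> h Hh Hhh.
  have Ht : isEndo (se K t s (d + k) y W') (sa K (d + k) W') h^T.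
    by apply: (endo_tr Hh) => [v|a]; [rewrite se_tr se_flip | rewrite sa_flip].
  have Hhh' : h^T *m h^T = h^T by rewrite -trmx_mul Hhh.
  case: (shift_indec Hs' Hstr'' Hd Hk Hcopy' Hvert' Hper' HdL' Hninv' Ht Hhh') => E.
    by left; rewrite -[h]trmxK E trmx0.
  by right; rewrite -[h]trmxK E trmx1.
+ apply: (endo_tr (shift_endo K Hs' Hstr'' Hd Hk Hcopy' Hper' HdM' HdL')) => [v|a].
    by rewrite se_flip se_tr.
  by rewrite sa_flip // trmxK.
+ by rewrite trmx_eq0; exact: (shift_nz K Hs Hstr' Hd Hk).
+ by rewrite -trmx_mul (shift_sq K Hs Hstr' Hd Hk) trmx0.
Qed.
Section Sub.
Variables (V Ar : finType) (s t : Ar -> V) (R : Ar -> Ar -> bool).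

Lemma isString_drop y W p : isString s t R y W -> (p <= size W)%N ->
  isString s t R (svert s t y W p) (drop p W).
Proof.
move=> Hstr Hp; apply/andP; split; last by apply: drop_sorted; case/andP: Hstr.
case: (ltnP p (size W)) => Hp2; last by rewrite drop_oversize.
have [x _] : exists x : Ar * bool, True by case: (W) Hp2 => [|l ?] //; exists l.
rewrite (drop_nth x) // (str_src x Hstr Hp2) //.
Qed.

Lemma isString_take y W m : isString s t R y W -> isString s t R y (take m W).
Proof.
case/andP => H1 H2; apply/andP; split.
  by case: m => [|m] //; case: (W) H1.
case: (W) H2 => [|l W'] //= H2.
case: m => [|m] //=; exact: path_take.
Qed.

Lemma svert_drop y W p r : (p <= size W)%N -> (r <= size W - p)%N ->
  svert s t (svert s t y W p) (drop p W) r = svert s t y W (p + r).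
Proof.
move=> Hp Hr.
have Hsz : size (take p W) = p by rewrite size_take_min; lia.
have := @svert_cat2 V Ar s t y (take p W) (drop p W) r.
rewrite cat_take_drop Hsz svert_take // => ->; first by [].
by rewrite size_drop.
Qed.

End Sub.

Lemma str_distinct_aux (K : fieldType) (V Ar : finType) (s t : Ar -> V) R :
  brick_gentle K s t R -> forall n y W, (size W <= n)%N -> isString s t R y W ->
  forall p q, (p < q)%N -> (q <= size W)%N -> svert s t y W p = svert s t y W q -> False.
Proof.
move=> Hbg; elim=> [|n IH] y W Hn Hstr.
  by move=> p q; lia.
have Hsub : forall p q, (p < q)%N -> (q <= size W)%N -> ((0 < p)%N || (q < size W)%N) ->
    svert s t y W p = svert s t y W q -> False.
  move=> p q Hpq Hq Hor Heq.
  pose W' := take (q - p) (drop p W).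
  have HW' : size W' = (q - p)%N by rewrite size_take_min size_drop; lia.
  have Hstr' : isString s t R (svert s t y W p) W'.
    by apply: isString_take; apply: isString_drop => //; lia.
  have Hn2 : (size W' <= n)%N by rewrite HW'; lia.
  apply: (IH _ _ Hn2 Hstr' 0%N (q - p)%N); try lia.
  rewrite /W' !svert_take //.
  rewrite !svert_drop ?addn0; try lia.
  by rewrite Heq subnKC //; lia.
move=> p q Hpq Hq Heq.
case: (boolP ((0 < p)%N || (q < size W)%N)) => Hor; first exact: Hsub Hpq Hq Hor Heq.
have Hp0 : p = 0%N by lia.
have Hqs : q = size W by lia.
apply: (closed_walk Hbg Hstr); first by lia.
  by rewrite -Hqs -Heq Hp0.
move=> p' q' Hp' Hq' Heq'.
case: (ltngtP p' q') => // H.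
  by exfalso; apply: (Hsub p' q') => //; [lia | rewrite Hq' orbT].
by exfalso; apply: (Hsub q' p') => //; [lia | rewrite Hp' orbT].
Qed.

Lemma str_distinct (K : fieldType) (V Ar : finType) (s t : Ar -> V) R :
  brick_gentle K s t R -> forall y W, isString s t R y W ->
  forall p q, (p <= size W)%N -> (q <= size W)%N -> svert s t y W p = svert s t y W q -> p = q.
Proof.
move=> Hbg y W Hstr p q Hp Hq Heq.
case: (ltngtP p q) => // H; exfalso.
  exact: (str_distinct_aux Hbg (leqnn _) Hstr H Hq Heq).
exact: (str_distinct_aux Hbg (leqnn _) Hstr H Hp (esym Heq)).
Qed.

Section Pi.
Variables (V Ar : finType) (s t : Ar -> V) (R : Ar -> Ar -> bool).

Lemma spec_str_letter (l : Ar * bool) r : specialize (str_letter l r) = l.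
Proof. by case: l => a [] ; case: r. Qed.

Lemma spec_str (w : seq (Ar * bool)) (D : (size w).-tuple bool) :
  map (@specialize Ar) (str D) = w.
Proof.
rewrite /str -map_comp.
rewrite (eq_map (g := fst)); last by case=> l r /=; rewrite spec_str_letter.
by rewrite -/(unzip1 _) unzip1_zip // size_tuple.
Qed.

Lemma pi_lsrc l : lsrc (piS s t) (piT s t) l = lsrc s t (specialize l).
Proof. by case: l => [[a|a] []]. Qed.
Lemma pi_ltgt l : ltgt (piS s t) (piT s t) l = ltgt s t (specialize l).
Proof. by case: l => [[a|a] []]. Qed.

Lemma pi_ok l1 l2 : ok_pair s t R (specialize l1) (specialize l2) ->
  ok_pair (piS s t) (piT s t) (piR R) l1 l2.
Proof.
rewrite /ok_pair !pi_lsrc !pi_ltgt => /and4P [-> H2 H3 H4] /=.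
case: l1 l2 H2 H3 H4 => [[a|a] e1] [[b|b] e2]; case: e1; case: e2;
  rewrite /specialize /= ?andbF ?andbT //.
Qed.

Lemma pi_isString x0 u : isString s t R x0 (map (@specialize Ar) u) ->
  isString (piS s t) (piT s t) (piR R) x0 u.
Proof.
case: u => [|l u] //= /andP [H1 H2]; apply/andP; split; first by rewrite pi_lsrc.
move: H2; rewrite /= path_map => H2.
by apply: sub_path H2 => x y /= /pi_ok.
Qed.

Lemma pi_svert x0 u p : svert (piS s t) (piT s t) x0 u p = svert s t x0 (map (@specialize Ar) u) p.
Proof.
rewrite /svert -map_comp; congr (nth _ (_ :: _) _).
by apply: eq_map => l /=; rewrite pi_ltgt.
Qed.

End Pi.

Theorem lemma6p5 (k : fieldType) (V Ar : finType) (s t : Ar -> V)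
    (R : Ar -> Ar -> bool) :
  brick_gentle k s t R ->
  forall (x0 : V) (w : seq (Ar * bool)) (D : (size w).-tuple bool),
    isString s t R x0 w ->
    let u := str D in
    [/\ isString (piS s t) (piT s t) (piR R) x0 u,
        map (@specialize Ar) u = w,
        isRep (piS s t) (piT s t) (piR R) (smod_e k (piS s t) (piT s t) x0 u)
              (smod_act k x0 u)
      & isBrick (smod_e k (piS s t) (piT s t) x0 u) (smod_act k x0 u)].
Proof.
move=> Hbg x0 w D Hstr u.
have Hspec : map (@specialize Ar) u = w := spec_str D.
have HstrU : isString (piS s t) (piT s t) (piR R) x0 u by apply: pi_isString; rewrite Hspec.
have Hsz : size u = size w by rewrite -Hspec size_map.
clearbody u.
split => //.
  exact: (str_rep k (erefl (size u)) HstrU).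
move=> f Hf.
have Hf' : isEndo (se k (piS s t) (piT s t) (size u) x0 u) (sa k (size u) u) f := Hf.
exists (f (inord 0) (inord 0)).
have HD : forall p, (p <= size u)%N -> f (inord p) (inord p) = f (inord 0) (inord 0).
  elim=> [//|p IH] Hp.
  have [x _] : exists x : (Ar + Ar) * bool, True by case: (u) Hp => [|l ?] //; exists l.
  rewrite (endo_step (p:=p) (q:=p) (x:=x) HstrU (erefl _) Hf'); [by apply: IH; apply: ltnW | exact: Hp | exact: Hp | by []].
apply/matrixP => i j; rewrite mxE.
case: (eqVneq i j) => [<-|Hij].
  by rewrite mulr1n -(HD i) ?inord_val //; exact: ltn_ord i.
rewrite mulr0n (endo_zero Hf') //.
rewrite !pi_svert Hspec; apply/negP => /eqP E.
have := str_distinct Hbg Hstr _ _ E.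
have HI := ltn_ord i; have HJ := ltn_ord j.
move=> H; move/eqP: Hij; apply; apply/val_inj; apply: H; rewrite -Hsz; [exact: HI | exact: HJ].
Qed.
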